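(* (1) For every $\mathtt{dCBN}$ term $M$: $\mathcal T^n(M)=\mathcal T(M^n)$. (2) For every $\mathtt{dCBV}$ term $M$: $\mathcal T^v(M)=\mathcal T(M^v)$.
   Context: \textbf{dBang and translations.} $\mathtt{dBang}$ terms: $M ::= x\mid\lambda x.M\mid MN\mid M[N/x]\mid\ !M\mid\mathrm{der}\,M$. $\mathtt{dCBN}$/$\mathtt{dCBV}$ terms: $M::=x\mid\lambda x.M\mid MN\mid M[N/x]$; values $V::=x\mid\lambda x.M$; list contexts $L::=\square\mid L[N/x]$. $x^n=x$, $(\lambda x.M)^n=\lambda x.M^n$, $(MN)^n=M^n\,!N^n$, $(M[N/x])^n=M^n[!N^n/x]$. $x^v=!x$, $(\lambda x.M)^v=!(\lambda x.M^v)$, $(MN)^v=L\langle P\rangle N^v$ if $M^v=L\langle !P\rangle$ for a list context $L$, else $(MN)^v=\mathrm{der}(M^v)\,N^v$; $(M[N/x])^v=M^v[N^v/x]$. \textbf{Resource terms} $m,n::=x\mid\lambda x.m\mid mn\mid m[n/x]\mid\mathrm{der}\,m\mid[m_1,\dots,m_k]$ ($k\ge0$ multisets); resource list contexts $l::=\square\mid l[n/x]$. \textbf{dBang approximation:} $x\sqsubset x$; $\lambda x.m\sqsubset\lambda x.M$ if $m\sqsubset M$; $mn\sqsubset MN$ and $m[n/x]\sqsubset M[N/x]$ if $m\sqsubset M,n\sqsubset N$; $\mathrm{der}\,m\sqsubset\mathrm{der}\,M$ if $m\sqsubset M$; $[m_1,\dots,m_k]\sqsubset\ !M$ ($k\ge0$)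 if all $m_i\sqsubset M$. $\mathcal T(M)=\{m\mid m\sqsubset M\}$. \textbf{dCBN approximation} $\sqsubset_n$: $x\sqsubset_n x$; $\lambda x.m\sqsubset_n\lambda x.M$ if $m\sqsubset_n M$; $m[n_1,\dots,n_k]\sqsubset_n MN$ and $m[[n_1,\dots,n_k]/x]\sqsubset_n M[N/x]$ ($k\ge0$) if $m\sqsubset_n M$ and all $n_i\sqsubset_n N$. $\mathcal T^n(M)=\{m\mid m\sqsubset_n M\}$. \textbf{dCBV approximation} $\sqsubset_v$: $[x,\dots,x]\sqsubset_v x$ ($k\ge0$ copies); $[\lambda x.m_1,\dots,\lambda x.m_k]\sqsubset_v\lambda x.M$ ($k\ge0$) if all $m_i\sqsubset_v M$; $\mathrm{der}(m)\,n\sqsubset_v MN$ if $m\sqsubset_v M$, $n\sqsubset_v N$ and $M$ is not of the form $L\langle V\rangle$ with $V$ a value; $l\langle m\rangle n\sqsubset_v L\langle V\rangle N$ if $V$ is a value, $[m]\sqsubset_v V$, $n\sqsubset_v N$, and $l=\square[p_1/y_1]\cdots[p_j/y_j]$ with $L=\square[P_1/y_1]\cdots[P_j/y_j]$ and $p_i\sqsubset_v P_i$; $m[n/x]\sqsubset_v M[N/x]$ if $m\sqsubset_v M$, $n\sqsubset_v N$. $\mathcal T^v(M)=\{m\mid m\sqsubset_v M\}$. *)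

(* Defs.v *)
From Stdlib Require Import List.
Import ListNotations.

Inductive bterm : Type :=
| BVar : nat -> bterm
| BLam : nat -> bterm -> bterm
| BApp : bterm -> bterm -> bterm
| BES  : bterm -> nat -> bterm -> bterm   (* BES M x N = M[N/x] *)
| BBang : bterm -> bterm
| BDer : bterm -> bterm.

Inductive lterm : Type :=
| LVar : nat -> lterm
| LLam : nat -> lterm -> lterm
| LApp : lterm -> lterm -> lterm
| LES  : lterm -> nat -> lterm -> lterm.  (* LES M x N = M[N/x] *)

Definition is_value (V : lterm) : Prop :=
  match V with LVar _ | LLam _ _ => True | _ => False end.

(* Resource terms; a multiset [m1,...,mk] is represented by a list
   (all relations below are invariant under permutation of bags). *)
Inductive rterm : Type :=
| RVar : nat -> rterm
| RLam : nat -> rterm -> rterm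
| RApp : rterm -> rterm -> rterm
| RES  : rterm -> nat -> rterm -> rterm
| RDer : rterm -> rterm
| RBag : list rterm -> rterm.

(* List contexts L = □[P1/y1]...[Pj/yj] are represented by the list
   [(y1,P1); ...; (yj,Pj)] (innermost substitution first). *)
Definition bplug (P : bterm) (L : list (nat * bterm)) : bterm :=
  fold_left (fun acc yN => BES acc (fst yN) (snd yN)) L P.
Definition lplug (P : lterm) (L : list (nat * lterm)) : lterm :=
  fold_left (fun acc yN => LES acc (fst yN) (snd yN)) L P.
Definition rplug (p : rterm) (l : list (nat * rterm)) : rterm :=
  fold_left (fun acc yN => RES acc (fst yN) (snd yN)) l p.

(* Decomposition M = L<!P>, if any (it is unique). *)
Fixpoint peel_bang (M : bterm) : option (bterm * list (nat * bterm)) :=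
  match M with
  | BBang P => Some (P, [])
  | BES M' x N =>
      match peel_bang M' with
      | Some (P, L) => Some (P, L ++ [(x, N)])
      | None => None
      end
  | _ => None
  end.

Fixpoint cbn_tr (M : lterm) : bterm :=
  match M with
  | LVar x => BVar x
  | LLam x M => BLam x (cbn_tr M)
  | LApp M N => BApp (cbn_tr M) (BBang (cbn_tr N))
  | LES M x N => BES (cbn_tr M) x (BBang (cbn_tr N))
  end.

Fixpoint cbv_tr (M : lterm) : bterm :=
  match M with
  | LVar x => BBang (BVar x)
  | LLam x M => BBang (BLam x (cbv_tr M))
  | LApp M N =>
      match peel_bang (cbv_tr M) with
      | Some (P, L) => BApp (bplug P L) (cbv_tr N)
      | None => BApp (BDer (cbv_tr M)) (cbv_tr N)
      end
  | LES M x N => BES (cbv_tr M) x (cbv_tr N)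
  end.

Inductive approx : rterm -> bterm -> Prop :=
| ap_var : forall x, approx (RVar x) (BVar x)
| ap_lam : forall x m M, approx m M -> approx (RLam x m) (BLam x M)
| ap_app : forall m n M N, approx m M -> approx n N -> approx (RApp m n) (BApp M N)
| ap_es : forall m n x M N, approx m M -> approx n N -> approx (RES m x n) (BES M x N)
| ap_der : forall m M, approx m M -> approx (RDer m) (BDer M)
| ap_bang : forall ms M, (forall m, In m ms -> approx m M) -> approx (RBag ms) (BBang M).

Definition T (M : bterm) : rterm -> Prop := fun m => approx m M.

Inductive approx_n : rterm -> lterm -> Prop :=
| apn_var : forall x, approx_n (RVar x) (LVar x)
| apn_lam : forall x m M, approx_n m M -> approx_n (RLam x m) (LLam x M)
| apn_app : forall m ns M N, approx_n m M -> (forall n, In n ns -> approx_n n N) ->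
    approx_n (RApp m (RBag ns)) (LApp M N)
| apn_es : forall m ns x M N, approx_n m M -> (forall n, In n ns -> approx_n n N) ->
    approx_n (RES m x (RBag ns)) (LES M x N).

Definition Tn (M : lterm) : rterm -> Prop := fun m => approx_n m M.

Inductive approx_v : rterm -> lterm -> Prop :=
| apv_var : forall x ms, (forall m, In m ms -> m = RVar x) -> approx_v (RBag ms) (LVar x)
| apv_lam : forall x ms M,
    (forall m, In m ms -> exists m', m = RLam x m' /\ approx_v m' M) ->
    approx_v (RBag ms) (LLam x M)
| apv_app_der : forall m n M N, approx_v m M -> approx_v n N ->
    ~ (exists V L, is_value V /\ M = lplug V L) ->
    approx_v (RApp (RDer m) n) (LApp M N)
| apv_app_ctx : forall m n l V L N, is_value V -> approx_v (RBag [m]) V ->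
    approx_v n N -> approx_v_ctx l L ->
    approx_v (RApp (rplug m l) n) (LApp (lplug V L) N)
| apv_es : forall m n x M N, approx_v m M -> approx_v n N ->
    approx_v (RES m x n) (LES M x N)
with approx_v_ctx : list (nat * rterm) -> list (nat * lterm) -> Prop :=
| apvc_nil : approx_v_ctx [] []
| apvc_cons : forall y p P l L, approx_v p P -> approx_v_ctx l L ->
    approx_v_ctx ((y, p) :: l) ((y, P) :: L).

Definition Tv (M : lterm) : rterm -> Prop := fun m => approx_v m M.

(* Main.v *)
Require Import Defs.
From Stdlib Require Import List Lia.
Import ListNotations.

Lemma cbn_part : forall M m, Tn M m <-> T (cbn_tr M) m.
Proof.
  unfold Tn, T. induction M as [x|x M IH|M IHM N IHN|M IHM x N IHN]; intro m; simpl; split; intro H.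
  - inversion H; constructor.
  - inversion H; constructor.
  - inversion H; subst. constructor. apply IH; auto.
  - inversion H; subst. constructor. apply IH; auto.
  - inversion H; subst. constructor. apply IHM; auto. constructor. intros n Hn. apply IHN; auto.
  - inversion H; subst. match goal with H2 : approx _ (BBang _) |- _ => inversion H2; subst end.
    constructor. apply IHM; auto. intros n Hn. apply IHN; auto.
  - inversion H; subst. constructor. apply IHM; auto. constructor. intros n Hn. apply IHN; auto.
  - inversion H; subst. match goal with H2 : approx _ (BBang _) |- _ => inversion H2; subst end.
    constructor. apply IHM; auto. intros n Hn. apply IHN; auto.
Qed.

Definition mapc (L : list (nat * lterm)) : list (nat * bterm) :=
  map (fun yP => (fst yP, cbv_tr (snd yP))) L.

Definition ctxB (l : list (nat * rterm)) (L : list (nat * bterm)) : Prop :=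
  Forall2 (fun a b => fst a = fst b /\ approx (snd a) (snd b)) l L.

Lemma cbv_lplug : forall L M, cbv_tr (lplug M L) = bplug (cbv_tr M) (mapc L).
Proof.
  induction L as [|[y N] L IH]; intro M; [reflexivity| exact (IH (LES M y N))].
Qed.

Lemma peel_bplug : forall L B, peel_bang (bplug B L) =
  match peel_bang B with Some (P, L0) => Some (P, L0 ++ L) | None => None end.
Proof.
  induction L as [|[y N] L IH]; intro B; simpl.
  - destruct (peel_bang B) as [[P L0]|]; auto. rewrite app_nil_r; auto.
  - unfold bplug in *; simpl. rewrite IH. simpl.
    destruct (peel_bang B) as [[P L0]|]; auto. rewrite <- app_assoc; reflexivity.
Qed.

Lemma approx_bplug : forall L B m, approx m (bplug B L) <->
  exists q l, m = rplug q l /\ approx q B /\ ctxB l L.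
Proof.
  induction L as [|[y N] L IH]; intros B m.
  - simpl. split.
    + intro H. exists m, []. repeat split; auto. constructor.
    + intros [q [l [-> [Hq Hl]]]]. inversion Hl; subst. exact Hq.
  - change (approx m (bplug (BES B y N) L) <->
      exists q l, m = rplug q l /\ approx q B /\ ctxB l ((y, N) :: L)).
    rewrite IH. split.
    + intros [q [l [-> [Hq Hl]]]]. inversion Hq as [| | |q0 n0 y0 B0 N0 Hq0 Hn0| |]; subst.
      exists q0, ((y, n0) :: l). split; [reflexivity|]. split; auto. constructor; auto.
    + intros [q [l [-> [Hq Hl]]]]. inversion Hl as [|a b l' L' Hab Hrest]; subst. destruct a as [y' p].
      simpl in Hab. destruct Hab as [-> Hp].
      exists (RES q y p), l'. split; [reflexivity|]. split; auto. constructor; auto.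
Qed.

Lemma peel_some : forall M P L', peel_bang (cbv_tr M) = Some (P, L') ->
  exists V L, is_value V /\ M = lplug V L /\ cbv_tr V = BBang P /\ L' = mapc L.
Proof.
  induction M as [x|x M IH|M IHM N IHN|M IHM x N IHN]; intros P L' H; simpl in H.
  - inversion H; subst. exists (LVar x), []. simpl; auto.
  - inversion H; subst. exists (LLam x M), []. simpl; auto.
  - destruct (peel_bang (cbv_tr M)) as [[? ?]|]; simpl in H; discriminate.
  - destruct (peel_bang (cbv_tr M)) as [[P0 L0]|] eqn:E; [|discriminate].
    inversion H; subst. destruct (IHM _ _ eq_refl) as (V & L & Hv & -> & Hc & ->).
    exists V, (L ++ [(x, N)]). split; auto. split.
    + unfold lplug. rewrite fold_left_app. reflexivity.
    + split; auto. unfold mapc. rewrite map_app. reflexivity.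
Qed.

Lemma peel_none : forall M, peel_bang (cbv_tr M) = None ->
  ~ exists V L, is_value V /\ M = lplug V L.
Proof.
  intros M H [V [L [Hv ->]]]. rewrite cbv_lplug, peel_bplug in H.
  destruct V; simpl in *; try contradiction; discriminate.
Qed.

Lemma value_bang : forall V, is_value V -> exists P, cbv_tr V = BBang P.
Proof. intros V Hv; destruct V; simpl in *; try contradiction; eauto. Qed.

Fixpoint lsize (M : lterm) : nat :=
  match M with
  | LVar _ => 1
  | LLam _ M => S (lsize M)
  | LApp M N => S (lsize M + lsize N)
  | LES M _ N => S (lsize M + lsize N)
  end.

Lemma lsize_lplug : forall L M, lsize M <= lsize (lplug M L) /\
  (forall y P, In (y, P) L -> lsize P < lsize (lplug M L)).
Proof.
  induction L as [|[y N] L IH]; intro M; simpl.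
  - split; auto. intros; contradiction.
  - unfold lplug in *; simpl. destruct (IH (LES M y N)) as [H1 H2]. simpl in H1.
    split; [lia|]. intros y' P [E|Hin].
    + inversion E; subst. lia.
    + eauto.
Qed.

Lemma ctx_equiv : forall L l,
  (forall y P, In (y, P) L -> forall m, approx_v m P <-> approx m (cbv_tr P)) ->
  (approx_v_ctx l L <-> ctxB l (mapc L)).
Proof.
  induction L as [|[y P] L IH]; intros l HI; destruct l as [|[z p] l]; unfold ctxB in *; simpl.
  - split; constructor.
  - split; intro H; inversion H.
  - split; intro H; inversion H.
  - assert (HL : forall y P, In (y, P) L -> forall m, approx_v m P <-> approx m (cbv_tr P)).
    { intros; eapply HI; simpl; eauto. }
    split; intro H.
    + inversion H as [|y0 p0 P0 l0 L0 Hp Hl]; subst. constructor.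
      * simpl. split; auto. apply (HI y); simpl; auto.
      * apply (IH l HL); auto.
    + inversion H as [|a b l' L' Hab Hrest]; subst. simpl in Hab. destruct Hab as [-> Hp].
      constructor. apply (HI y); simpl; auto. apply (IH l HL); auto.
Qed.

Lemma cbv_main : forall n M, lsize M < n -> forall m, approx_v m M <-> approx m (cbv_tr M).
Proof.
  induction n as [|n IHn]; intros M Hs m; [lia|].
  destruct M as [x|x M|M N|M x N].
  - simpl. split; intro H.
    + inversion H as [x0 ms Hms| | | |]; subst. constructor. intros m0 Hin.
      rewrite (Hms m0 Hin). constructor.
    + inversion H as [| | | | |ms M0 Hms]; subst. constructor. intros m0 Hin.
      specialize (Hms m0 Hin). inversion Hms; auto.
  - simpl in *. split; intro H.
    + inversion H as [|x0 ms M0 Hms| | |]; subst. constructor. intros m0 Hin.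
      destruct (Hms m0 Hin) as [m' [-> Hm']].
      constructor. apply IHn; [lia|auto].
    + inversion H as [| | | | |ms M0 Hms]; subst. constructor. intros m0 Hin.
      specialize (Hms m0 Hin).
      inversion Hms as [|x1 m1 M1 Hm1| | | |]; subst. exists m1. split; auto. apply IHn; [lia|auto].
  - assert (HM : lsize M < n) by (simpl in Hs; lia).
    assert (HN : lsize N < n) by (simpl in Hs; lia).
    split; intro H.
    + inversion H as [| |m1 n1 M1 N1 Hm1 Hn1 Hnot|m0 n0 l V L N0 Hv Hb Hn0 Hc|]; subst.
      * assert (E : peel_bang (cbv_tr M) = None).
        { destruct (peel_bang (cbv_tr M)) as [[P L']|] eqn:E; auto.
          exfalso. destruct (peel_some _ _ _ E) as (V & L & Hv & -> & _).
          apply Hnot; eauto. }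
        simpl. rewrite E. constructor; [constructor|]; apply IHn; auto.
      * destruct (lsize_lplug L V) as [S1 S2].
        destruct (value_bang V Hv) as [P HP].
        simpl. rewrite cbv_lplug, peel_bplug, HP. simpl.
        constructor; [|apply IHn; auto].
        apply approx_bplug. exists m0, l. split; auto. split.
        -- apply (IHn V) in Hb; [|lia]. rewrite HP in Hb.
           inversion Hb as [| | | | |ms M0 Hms]; subst.
           apply Hms; simpl; auto.
        -- apply (ctx_equiv L l); auto. intros y P0 Hin m1. apply IHn.
           specialize (S2 _ _ Hin); lia.
    + simpl in H. destruct (peel_bang (cbv_tr M)) as [[P L']|] eqn:E.
      * destruct (peel_some _ _ _ E) as (V & L & Hv & -> & HP & ->).
        destruct (lsize_lplug L V) as [S1 S2].
        inversion H as [| |m1 n1 M1 N1 Hm1 Hn1| | |]; subst. apply approx_bplug in Hm1.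
        destruct Hm1 as [q [l [-> [Hq Hl]]]].
        apply apv_app_ctx; auto.
        -- apply IHn; [lia|]. rewrite HP. constructor. intros m0 [<-|[]]; auto.
        -- apply IHn; auto.
        -- apply (ctx_equiv L l); auto. intros y P0 Hin m2. apply IHn.
           specialize (S2 _ _ Hin); lia.
      * inversion H as [| |m1 n1 M1 N1 Hm1 Hn1| | |]; subst.
        inversion Hm1 as [| | | |m2 M2 Hm2|]; subst. apply apv_app_der.
        apply IHn; auto. apply IHn; auto. apply peel_none; auto.
  - assert (HM : lsize M < n) by (simpl in Hs; lia).
    assert (HN : lsize N < n) by (simpl in Hs; lia).
    simpl. split; intro H; inversion H; subst; constructor; apply IHn; auto.
Qed.

Theorem mainTheorem9 :
  (forall M : lterm, forall m : rterm, Tn M m <-> T (cbn_tr M) m) /\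
  (forall M : lterm, forall m : rterm, Tv M m <-> T (cbv_tr M) m).
Proof.
  split.
  - exact cbn_part.
  - intros M m. unfold Tv, T. apply (cbv_main (S (lsize M))). lia.
Qed.
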